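(* The complete local statistics of an integer matrix $M\in\mathrm{Mat}(2,\mathbb{Z})$ depends only on the three invariants $\det(M)$, $\mathrm{trace}(M)$ and $\mathrm{mgcd}(M)$. Two integer matrices with the same triple of these invariants thus have the same local statistics on all lattices $L_n$, $n\in\mathbb{N}$. In particular, they have the same fixed point counts, both locally (the numbers of points of $L_n$ fixed by $M^m$, for all $n,m$) and globally (the numbers of isolated fixed points of $M^m$ on $\mathbb{T}^2$, for all $m$).
   Context: For $M=\begin{pmatrix}a&b\\c&d\end{pmatrix}$, $\mathrm{mgcd}(M)=\gcd(b,c,d-a)\ge0$. $\mathbb{T}^2=\mathbb{R}^2/\mathbb{Z}^2$, with integer matrices acting by multiplication mod $1$, and $L_n=\{(\frac{k}{n},\frac{\ell}{n}):0\le k,\ell<n\}\subset\mathbb{T}^2$. Two integer matrices have the same local statistics on $L_n$ if the directed pseudo-graphs on $L_n$ they induce (vertices the points of $L_n$, a directed edge from $x$ to $Mx$) are isomorphic as graphs. *)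

(* Defs.v *)
From HB Require Import structures.
From mathcomp Require Import all_boot all_order all_fingroup all_algebra.
From mathcomp Require Import reals.
Set Implicit Arguments. Unset Strict Implicit. Unset Printing Implicit Defensive.
Import Order.TTheory GRing.Theory Num.Theory.
Local Open Scope ring_scope.

(* Integer 2x2 matrices M = [[a, b], [c, d]] with a = M 0 0, b = M 0 1,
   c = M 1 0, d = M 1 1. *)
Notation mat2 := ('M[int]_2).

Definition ent (M : mat2) (i j : nat) : int := M (inord i) (inord j).

Definition mgcd (M : mat2) : int :=
  gcdz (ent M 0 1) (gcdz (ent M 1 0) (ent M 1 1 - ent M 0 0)).

(* The lattice L_n = {(k/n, l/n) : 0 <= k, l < n}; the point (k/n, l/n) is
   represented by the pair (k, l) : 'I_n * 'I_n. *)
Definition Lat (n : nat) : finType := ('I_n * 'I_n)%type.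

Lemma ord_pos (n : nat) (x : 'I_n) : (0 < n)%N.
Proof. exact: leq_ltn_trans (leq0n x) (ltn_ord x). Qed.

(* reduction of an integer modulo n, as an element of 'I_n
   (n > 0 is witnessed by an element of 'I_n) *)
Definition ord_mod (n : nat) (w : 'I_n) (z : int) : 'I_n :=
  Ordinal (ltn_pmod (absz (z %% n%:Z)%Z) (ord_pos w)).

(* The action of M on L_n (multiplication mod 1):
   M (k/n, l/n) = ((a k + b l)/n, (c k + d l)/n) mod 1. *)
Definition lat_map (M : mat2) (n : nat) (x : Lat n) : Lat n :=
  let k := (x.1 : nat)%:Z in let l := (x.2 : nat)%:Z in
  (ord_mod x.1 (ent M 0 0 * k + ent M 0 1 * l),
   ord_mod x.1 (ent M 1 0 * k + ent M 1 1 * l)).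

Definition lat_edge (M : mat2) (n : nat) : rel (Lat n) :=
  fun x y => lat_map M x == y.

(* Two integer matrices have the same local statistics on L_n iff the
   induced directed pseudo-graphs are isomorphic. *)
Definition same_local_stats (M N : mat2) (n : nat) : Prop :=
  exists phi : {perm Lat n},
    forall x y : Lat n, lat_edge M x y = lat_edge N (phi x) (phi y).

Definition lat_fix_count (M : mat2) (n : nat) : nat :=
  #|[set x : Lat n | lat_map M x == x]|.

Section Torus.
Variable R : realType.

Definition is_int (r : R) : Prop := exists k : int, r = k%:~R.

Definition in_fund (x : R * R) : Prop :=
  0 <= x.1 < 1 /\ 0 <= x.2 < 1.

Definition mat_act (M : mat2) (x : R * R) : R * R :=
  ((ent M 0 0)%:~R * x.1 + (ent M 0 1)%:~R * x.2,
   (ent M 1 0)%:~R * x.1 + (ent M 1 1)%:~R * x.2).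

Definition torus_fixed (M : mat2) (x : R * R) : Prop :=
  in_fund x /\ is_int ((mat_act M x).1 - x.1) /\ is_int ((mat_act M x).2 - x.2).

Definition torus_isolated_fixed (M : mat2) (x : R * R) : Prop :=
  torus_fixed M x /\
  exists eps : R, 0 < eps /\
    forall y, torus_fixed M y ->
      (exists k1 k2 : int, `|y.1 - x.1 - k1%:~R| < eps /\ `|y.2 - x.2 - k2%:~R| < eps) ->
      y = x.

Definition equinumerous (A B : R * R -> Prop) : Prop :=
  exists f : R * R -> R * R,
    (forall x, A x -> B (f x)) /\
    (forall x y, A x -> A y -> f x = f y -> x = y) /\
    (forall y, B y -> exists x, A x /\ f x = y).
End Torus.

(* Main.v *)
Require Import Defs.
From HB Require Import structures.
From mathcomp Require Import all_boot all_order all_fingroup all_algebra.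
From mathcomp Require Import reals.
From mathcomp Require Import zify ring lra.
Import Order.TTheory GRing.Theory Num.Theory.
Local Open Scope ring_scope.

Definition mk (a b c d : int) : mat2 :=
  \matrix_(i < 2, j < 2) if i == 0 then (if j == 0 then a else b) else (if j == 0 then c else d).

Lemma inord0 : (inord 0 : 'I_2) = 0. Proof. by apply: val_inj; rewrite /= inordK. Qed.
Lemma inord1 : (inord 1 : 'I_2) = 1. Proof. by apply: val_inj; rewrite /= inordK. Qed.

Lemma ent_mk a b c d :
  [/\ ent (mk a b c d) 0 0 = a, ent (mk a b c d) 0 1 = b,
      ent (mk a b c d) 1 0 = c & ent (mk a b c d) 1 1 = d].
Proof. by rewrite /ent !mxE inord0 inord1. Qed.

Lemma mkE (M : mat2) : M = mk (ent M 0 0) (ent M 0 1) (ent M 1 0) (ent M 1 1).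
Proof.
apply/matrixP=> i j; rewrite /ent !mxE inord0 inord1.
case: i => [[|[|i]] Hi] //; case: j => [[|[|j]] Hj] //=; congr (M _ _); exact: val_inj.
Qed.

Lemma mk_mul a b c d a' b' c' d' :
  mk a b c d * mk a' b' c' d' = mk (a*a' + b*c') (a*b' + b*d') (c*a' + d*c') (c*b' + d*d').
Proof.
apply/matrixP=> i j; rewrite !mxE !big_ord_recl !big_ord0 !mxE.
case: i => [[|[|i]] Hi] //; case: j => [[|[|j]] Hj] //=; rewrite !addr0 //.
Qed.

Lemma mk_eq a b c d a' b' c' d' : a = a' -> b = b' -> c = c' -> d = d' -> mk a b c d = mk a' b' c' d'.
Proof. by move=> -> -> -> ->. Qed.

Lemma mk_inj a b c d a' b' c' d' : mk a b c d = mk a' b' c' d' -> [/\ a = a', b = b', c = c' & d = d'].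
Proof. move=> h; have := ent_mk a b c d; rewrite h; case: (ent_mk a' b' c' d') => -> -> -> -> [] //. Qed.

Lemma det_mk a b c d : \det (mk a b c d) = a * d - b * c.
Proof. rewrite (expand_det_row _ 0) !big_ord_recl big_ord0 /cofactor !det_mx11 !mxE /=.
rewrite /bump /=; ring. Qed.
Lemma mk1 : (1 : mat2) = mk 1 0 0 1.
Proof. by apply/matrixP=> i j; rewrite !mxE; case: i => [[|[|i]] Hi] //; case: j => [[|[|j]] Hj]. Qed.
Lemma mk_add a b c d a' b' c' d' :
  mk a b c d + mk a' b' c' d' = mk (a+a') (b+b') (c+c') (d+d').
Proof. by apply/matrixP=> i j; rewrite !mxE; case: i => [[|[|i]] Hi] //; case: j => [[|[|j]] Hj]. Qed.
Lemma mk_opp a b c d : - mk a b c d = mk (-a) (-b) (-c) (-d).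
Proof. by apply/matrixP=> i j; rewrite !mxE; case: i => [[|[|i]] Hi] //; case: j => [[|[|j]] Hj]. Qed.
Lemma adj_mk a b c d : \adj (mk a b c d) = mk d (-b) (-c) a.
Proof. apply/matrixP=> i j; rewrite !mxE /cofactor !det_mx11 !mxE /=.
case: i => [[|[|i]] Hi] //; case: j => [[|[|j]] Hj] //=; rewrite /bump /=; ring. Qed.
Lemma tr_mk a b c d : \tr (mk a b c d) = a + d.
Proof. rewrite /mxtrace !big_ord_recl big_ord0 !mxE /=; ring. Qed.
Lemma dvd_part (pi : nat_pred) n p : prime p -> (0 < n)%N -> (p %| n)%N ->
  (p %| n`_pi)%N = (p \in pi).
Proof.
move=> pp n0 pn.
have := pi_of_part pi n0 p; rewrite !inE /= !mem_primes pp pn n0 part_gt0 /=.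
by [].
Qed.

Lemma Euclid_z p (m k : int) : prime p -> (p%:Z %| m * k)%Z = (p%:Z %| m)%Z || (p%:Z %| k)%Z.
Proof. by move=> pp; rewrite !dvdzE abszM /= Euclid_dvdM. Qed.

Lemma dvd_comb (d a b c : int) : (d %| a)%Z -> (d %| b)%Z -> (d %| c)%Z -> (d %| a - b + c)%Z.
Proof. by move=> *; rewrite rpredD ?rpredB. Qed.

Lemma form_coprime (r e q : int) (n : nat) : (0 < n)%N -> gcdz q (gcdz r e) = 1 ->
  exists x y : int, coprime `|(r*x*x + e*x*y - q*y*y)%R| n.
Proof.
move=> n0 prim.
pose pi1 : nat_pred := [pred p | ~~ (p %| `|r|)%N].
pose pi2 : nat_pred := [pred p | (p %| `|r|)%N && ~~ (p %| `|q|)%N].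
exists (n`_pi2)%:Z, (n`_pi1)%:Z.
set f := (X in coprime `|X| n).
apply/negPn/negP => nc.
set d := gcdn `|f| n.
have d1 : (1 < d)%N.
  have : (0 < d)%N by rewrite gcdn_gt0 n0 orbT.
  by rewrite /coprime -/d in nc; case: d nc => [|[|]].
have pp := pdiv_prime d1.
set p := pdiv d in pp.
have pd : (p %| d)%N := pdiv_dvd d.
have pf : (p%:Z %| f)%Z by rewrite dvdzE /=; exact: dvdn_trans pd (dvdn_gcdl _ _).
have pn : (p %| n)%N by exact: dvdn_trans pd (dvdn_gcdr _ _).
have hx : (p%:Z %| (n`_pi2)%:Z)%Z = (p \in pi2) by rewrite dvdzE /= dvd_part.
have hy : (p%:Z %| (n`_pi1)%:Z)%Z = (p \in pi1) by rewrite dvdzE /= dvd_part.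
have pr : (p%:Z %| r)%Z = (p %| `|r|)%N by rewrite dvdzE.
have pq : (p%:Z %| q)%Z = (p %| `|q|)%N by rewrite dvdzE.
rewrite !inE in hx hy.
move: pf; rewrite /f.
case: (boolP (p %| `|r|)%N) => [prd|prn] /= in hx hy.
  case: (boolP (p %| `|q|)%N) => [pqd|pqn] /= in hx.
    have pe : ~~ (p%:Z %| e)%Z.
      apply/negP => pe.
      have : (p%:Z %| gcdz q (gcdz r e))%Z by rewrite !dvdz_gcd pe pq pr pqd prd.
      by rewrite prim dvdzE /= dvdn1 => /eqP p1; rewrite p1 in pp.
    move=> H.
    have : (p%:Z %| e * (n`_pi2)%:Z * (n`_pi1)%:Z)%Z.
      have -> : e * (n`_pi2)%:Z * (n`_pi1)%:Z =
        (r * (n`_pi2)%:Z * (n`_pi2)%:Z + e * (n`_pi2)%:Z * (n`_pi1)%:Z - q * (n`_pi1)%:Z * (n`_pi1)%:Z)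
        - r * ((n`_pi2)%:Z * (n`_pi2)%:Z) + q * ((n`_pi1)%:Z * (n`_pi1)%:Z) by ring.
      by apply: dvd_comb => //; apply: dvdz_mulr; rewrite ?pr ?pq.
    by rewrite !Euclid_z // hx hy (negbTE pe).
  move=> H.
  have : (p%:Z %| q * (n`_pi1)%:Z * (n`_pi1)%:Z)%Z.
    have -> : q * (n`_pi1)%:Z * (n`_pi1)%:Z =
      - (r * (n`_pi2)%:Z * (n`_pi2)%:Z + e * (n`_pi2)%:Z * (n`_pi1)%:Z - q * (n`_pi1)%:Z * (n`_pi1)%:Z)
      - 0 + (n`_pi2)%:Z * (r * (n`_pi2)%:Z + e * (n`_pi1)%:Z) by ring.
    by apply: dvd_comb; rewrite ?rpredN ?dvdz0 // dvdz_mulr.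
  by rewrite !Euclid_z // hy pq (negbTE pqn).
move=> H.
have : (p%:Z %| r * (n`_pi2)%:Z * (n`_pi2)%:Z)%Z.
  have -> : r * (n`_pi2)%:Z * (n`_pi2)%:Z =
    (r * (n`_pi2)%:Z * (n`_pi2)%:Z + e * (n`_pi2)%:Z * (n`_pi1)%:Z - q * (n`_pi1)%:Z * (n`_pi1)%:Z)
    - (n`_pi1)%:Z * (e * (n`_pi2)%:Z - q * (n`_pi1)%:Z) + 0 by ring.
  by apply: dvd_comb; rewrite ?dvdz0 // dvdz_mulr.
by rewrite !Euclid_z // hx pr (negbTE prn).
Qed.

Lemma cyc (p q r s : int) (n : nat) : (0 < n)%N -> gcdz q (gcdz r (s - p)) = 1 ->
  exists x y : int,
    mk p q r s * mk x (p*x + q*y) y (r*x + s*y) =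
      mk x (p*x + q*y) y (r*x + s*y) * mk 0 (-(p * s - q*r)) 1 (p+s) /\
    coprime `|\det (mk x (p*x + q*y) y (r*x + s*y))| n.
Proof.
move=> n0 prim; have [x [y cop]] := @form_coprime r (s - p) q n n0 prim.
exists x, y; split.
  by rewrite !mk_mul; apply: mk_eq; ring.
rewrite det_mk.
by have -> : x * (r * x + s * y) - (p * x + q * y) * y = r * x * x + (s - p) * x * y - q * y * y by ring.
Qed.

Lemma conj_gen a g p q r s x1 x2 x3 x4 c1 c2 c3 c4 :
  mk p q r s * mk x1 x2 x3 x4 = mk x1 x2 x3 x4 * mk c1 c2 c3 c4 ->
  mk (a + g * p) (g*q) (g*r) (a+g*s) * mk x1 x2 x3 x4 =
    mk x1 x2 x3 x4 * mk (a + g*c1) (g*c2) (g*c3) (a + g*c4).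
Proof.
rewrite !mk_mul => /mk_inj [e1 e2 e3 e4]; apply: mk_eq.
- transitivity (a*x1 + g*(p * x1+q*x3)); first ring. by rewrite e1; ring.
- transitivity (a*x2 + g*(p * x2+q*x4)); first ring. by rewrite e2; ring.
- transitivity (a*x3 + g*(r*x1+s*x3)); first ring. by rewrite e3; ring.
- transitivity (a*x4 + g*(r*x2+s*x4)); first ring. by rewrite e4; ring.
Qed.

Lemma adj_conj (M S K : mat2) : M * S = S * K -> \det S != 0 -> \adj S * M = K * \adj S.
Proof.
move=> e dS.
have E : \det S *: (\adj S * M) = \det S *: (K * \adj S).
  rewrite -!mulmxE -mul_mx_scalar -mul_scalar_mx -{1}mul_mx_adj -mul_adj_mx.
  by rewrite !mulmxA -[_ *m M *m S]mulmxA !mulmxE e -!mulmxE !mulmxA.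
apply/matrixP => i j; apply: (mulfI dS).
by have := congr1 (fun A : mat2 => A i j) E; rewrite !mxE.
Qed.

Lemma shift_div (a d a2 d2 g q r s q2 r2 k : int) : g != 0 ->
  d - a = s * g -> d2 - a2 = k * g ->
  a + d = a2 + d2 -> a*d - (q*g)*(r*g) = a2*d2 - (q2*g)*(r2*g) ->
  exists h, a2 - a = h * g.
Proof.
move=> g0 hd hd2 htr hdet.
set u := a2 - a; set t := s - k.
have h1 : 2 * u = g * t by rewrite /u /t; lia.
have h2 : u * u + u * g * k + g * g * (q*r - q2*r2) = 0.
  have -> : u * u + u * g * k + g * g * (q*r - q2*r2) =
     a * (g * t - 2 * u) - ((a*d - (q*g)*(r*g)) - (a2*d2 - (q2*g)*(r2*g)))
     - (a + g*s - d) * a + (a2 + g * k - d2) * a2 by rewrite /u /t; ring.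
  have e1 : a + g * s - d = 0 by lia.
  have e2 : a2 + g * k - d2 = 0 by lia.
  by rewrite e1 e2 hdet -h1 !subrr; ring.
have h3 : g * g * (t * t + 2 * t * k + 4 * (q*r - q2*r2)) = 0.
  have -> : g * g * (t * t + 2 * t * k + 4 * (q*r - q2*r2)) =
    4 * (u * u + u * g * k + g * g * (q*r - q2*r2)) + (g*t - 2*u) * (g*t + 2*u + 2*g*k) by ring.
  by rewrite h2 h1 subrr; ring.
have h4 : t * t + 2 * t * k + 4 * (q*r - q2*r2) = 0.
  by move: h3; move/eqP; rewrite !mulf_eq0 (negbTE g0) /= => /eqP.
have tE := divz_eq t 2.
have m0 : 0 <= (t %% 2)%Z by apply: modz_ge0.
have m1 : (t %% 2)%Z < 2 by have := ltz_mod t (d:=2) isT.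
set hh := (t %/ 2)%Z in tE; set m := (t %% 2)%Z in tE m0 m1.
have mz : m = 0.
  case: (m =P 0) => // mn; exfalso.
  have m1' : m = 1 by lia.
  rewrite tE m1' in h4.
  have : (hh * 2 + 1) * (hh * 2 + 1) + 2 * (hh * 2 + 1) * k + 4 * (q * r - q2 * r2) =
    2 * (2 * hh * hh + 2 * hh + 2 * hh * k + k + 2 * (q*r - q2*r2)) + 1 by ring.
  lia.
exists hh.
rewrite mz addr0 in tE.
have : 2 * u = 2 * (hh * g) by rewrite h1 tE; ring.
lia.
Qed.

Lemma gcd3_scale (x y z g : int) : 0 <= g ->
  gcdz (x * g) (gcdz (y * g) (z * g)) = gcdz x (gcdz y z) * g.
Proof. by move=> g0; rewrite -(gez0_abs g0) -!mulz_gcdl. Qed.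

Lemma conj_mk a b c d a2 b2 c2 d2 (n : nat) : (0 < n)%N ->
  a*d - b*c = a2*d2 - b2*c2 -> a + d = a2 + d2 ->
  gcdz b (gcdz c (d-a)) = gcdz b2 (gcdz c2 (d2-a2)) ->
  exists P : mat2, P * mk a b c d = mk a2 b2 c2 d2 * P /\
     coprime `|\det P| n /\ \det P != 0.
Proof.
move=> n0 hdet htr hg.
set g := gcdz b (gcdz c (d-a)) in hg.
have g0 : 0 <= g by rewrite /g.
case: (g =P 0) => [gz|gnz].
  move: (gz) => /eqP; rewrite /g !gcdz_eq0 => /and3P[/eqP b0 /eqP c0 /eqP da].
  move: gz; rewrite hg => /eqP; rewrite !gcdz_eq0 => /and3P[/eqP b20 /eqP c20 /eqP da2].
  have ed : d = a by lia.
  have ed2 : d2 = a2 by lia.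
  have ea : a = a2 by lia.
  exists 1; rewrite mul1r mulr1 mk1 det_mk; split; last split.
  - by subst.
  - by rewrite mulr1 mulr0 subr0 /= coprime1n.
  - by rewrite mulr1 mulr0 subr0 oner_eq0.
move/eqP: gnz => gnz.
have [q bq] : exists q, b = q * g by apply/dvdzP; rewrite /g dvdz_gcdl.
have [r cr] : exists r, c = r * g by apply/dvdzP; rewrite /g (dvdz_trans (dvdz_gcdr _ _)) // dvdz_gcdl.
have [s ds] : exists s, d - a = s * g by apply/dvdzP; rewrite /g (dvdz_trans (dvdz_gcdr _ _)) // dvdz_gcdr.
have [q2 bq2] : exists q, b2 = q * g by apply/dvdzP; rewrite hg dvdz_gcdl.
have [r2 cr2] : exists r, c2 = r * g by apply/dvdzP; rewrite hg (dvdz_trans (dvdz_gcdr _ _)) // dvdz_gcdl.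
have [k dk] : exists s, d2 - a2 = s * g by apply/dvdzP; rewrite hg (dvdz_trans (dvdz_gcdr _ _)) // dvdz_gcdr.
have hdet' : a*d - (q*g)*(r*g) = a2*d2 - (q2*g)*(r2*g) by rewrite -bq -cr -bq2 -cr2.
have [h ah] := @shift_div a d a2 d2 g q r s q2 r2 k gnz ds dk htr hdet'.
have prim1 : gcdz q (gcdz r (s - 0)) = 1.
  by apply: (mulIf gnz); rewrite mul1r subr0 -gcd3_scale // -bq -cr -ds.
have prim2 : gcdz q2 (gcdz r2 ((k + h) - h)) = 1.
  by apply: (mulIf gnz); rewrite mul1r addrK -gcd3_scale // -bq2 -cr2 -dk -hg.
have n2 : (0 < n * 2)%N by rewrite muln_gt0 n0.
have [x [y [eS cS]]] := @cyc 0 q r s (n*2) n2 prim1.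
have [x' [y' [eT cT]]] := @cyc h q2 r2 (k + h) (n*2) n2 prim2.
have es : 0 + s = h + (k + h).
  apply: (mulIf gnz); lia.
have eqr : - (0 * s - q * r) = - (h * (k + h) - q2 * r2).
  congr (- _); apply: (mulIf (mulf_neq0 gnz gnz)).
  have L : (0 * s - q * r) * (g * g) = (a*d - b*c) - a*(a+d) + a*a by rewrite bq cr; ring.
  have d2a : d2 - a = (k + h) * g by lia.
  have R : (h * (k + h) - q2 * r2) * (g * g) = (a2*d2 - b2*c2) - a*(a2+d2) + a*a.
    transitivity ((a2 - a) * (d2 - a) - b2 * c2); last ring.
    by rewrite ah d2a bq2 cr2; ring.
  by rewrite L R hdet htr.
have KM := @conj_gen a g _ _ _ _ _ _ _ _ _ _ _ _ eS.
have KN := @conj_gen a g _ _ _ _ _ _ _ _ _ _ _ _ eT.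
rewrite es eqr in KM.
have EM : mk a b c d = mk (a + g * 0) (g * q) (g * r) (a + g * s).
  by apply: mk_eq; rewrite ?bq ?cr; lia.
have EN : mk a2 b2 c2 d2 = mk (a + g * h) (g * q2) (g * r2) (a + g * (k + h)).
  by apply: mk_eq; rewrite ?bq2 ?cr2; lia.
rewrite EM EN.
set S := mk x _ _ _ in KM cS; set T := mk x' _ _ _ in KN cT.
have dS : \det S != 0.
  by apply/eqP => e; rewrite e /coprime gcd0n in cS; move/eqP: cS; lia.
have dT : \det T != 0.
  by apply/eqP => e; rewrite e /coprime gcd0n in cT; move/eqP: cT; lia.
have AK := @adj_conj _ S _ KM dS.
have dadj : \det (\adj S) = \det S by rewrite /S adj_mk !det_mk; ring.
exists (T * \adj S); split; last split.
- by rewrite -mulrA AK mulrA -KN mulrA.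
- rewrite detM dadj abszM coprimeMl.
  by rewrite coprimeMr in cS; rewrite coprimeMr in cT; case/andP: cS => -> _; case/andP: cT => -> _.
- by rewrite detM dadj mulf_neq0.
Qed.

Lemma e00 a b c d : ent (mk a b c d) 0 0 = a. Proof. by case: (ent_mk a b c d). Qed.
Lemma e01 a b c d : ent (mk a b c d) 0 1 = b. Proof. by case: (ent_mk a b c d). Qed.
Lemma e10 a b c d : ent (mk a b c d) 1 0 = c. Proof. by case: (ent_mk a b c d). Qed.
Lemma e11 a b c d : ent (mk a b c d) 1 1 = d. Proof. by case: (ent_mk a b c d). Qed.
Definition entE := (e00, e01, e10, e11).

Lemma conj_exists (M N : mat2) : \det M = \det N -> \tr M = \tr N -> mgcd M = mgcd N ->
  forall n, (0 < n)%N -> exists P : mat2, P * M = N * P /\ coprime `|\det P| n /\ \det P != 0.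
Proof.
move=> hd ht hg n n0; rewrite /mgcd in hg.
rewrite [M]mkE [N]mkE in hd ht *; rewrite !det_mk in hd; rewrite !tr_mk in ht.
exact: conj_mk.
Qed.

Lemma Posz_inj' (u v : nat) : u%:Z = v%:Z -> u = v. Proof. by case. Qed.

Lemma ord_modE n (w : 'I_n) z : ((ord_mod w z : nat))%:Z = (z %% n%:Z)%Z.
Proof.
have n0 : n%:Z != 0 by have := ord_pos w; case: n w.
have m0 : 0 <= (z %% n%:Z)%Z by apply: modz_ge0.
rewrite /ord_mod /= modn_small; first by rewrite gez0_abs.
by rewrite -ltz_nat gez0_abs // (ltz_mod z n0).
Qed.

Lemma lat_map_mul (P X : mat2) n (x : Lat n) :
  lat_map (P * X) x = lat_map P (lat_map X x).
Proof.
case: x => i j; rewrite /lat_map /=.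
rewrite [P]mkE [X]mkE mk_mul !entE.
congr pair; apply: val_inj; apply: Posz_inj'; rewrite !ord_modE; try exact: i;
  rewrite -[RHS]modzDm !modzMmr modzDm; congr (_ %% _)%Z; ring.
Qed.

Lemma lat_map_inj (P : mat2) n : coprime `|\det P| n -> injective (@lat_map P n).
Proof.
move=> cp [i j] [i' j'] /= e; have e1 := congr1 fst e; have e2 := congr1 snd e; simpl in e1, e2.
have /eqP h1 := congr1 (fun o : 'I_n => (o : nat)%:Z) e1.
have /eqP h2 := congr1 (fun o : 'I_n => (o : nat)%:Z) e2.
rewrite /= !ord_modE in h1 h2.
have ci : coprimez n%:Z (\det P) by rewrite coprimezE coprime_sym.
set p00 := ent P 0 0 in h1 h2; set p01 := ent P 0 1 in h1 h2.
set p10 := ent P 1 0 in h1 h2; set p11 := ent P 1 1 in h1 h2.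
have dP : \det P = p00 * p11 - p01 * p10 by rewrite {1}[P]mkE det_mk.
move: h1 h2; rewrite -!/(_ == _ %[mod _])%Z !eqz_mod_dvd => h1 h2.
have d1 : (n%:Z %| \det P * (i%:Z - i'%:Z))%Z.
  have -> : \det P * (i%:Z - i'%:Z) =
     p11 * (p00 * i%:Z + p01 * j%:Z - (p00 * i'%:Z + p01 * j'%:Z))
     - p01 * (p10 * i%:Z + p11 * j%:Z - (p10 * i'%:Z + p11 * j'%:Z)) by rewrite dP; ring.
  by rewrite rpredB // dvdz_mull.
have d2 : (n%:Z %| \det P * (j%:Z - j'%:Z))%Z.
  have -> : \det P * (j%:Z - j'%:Z) =
     p00 * (p10 * i%:Z + p11 * j%:Z - (p10 * i'%:Z + p11 * j'%:Z))
     - p10 * (p00 * i%:Z + p01 * j%:Z - (p00 * i'%:Z + p01 * j'%:Z)) by rewrite dP; ring.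
  by rewrite rpredB // dvdz_mull.
rewrite Gauss_dvdzr // -eqz_mod_dvd in d1.
rewrite Gauss_dvdzr // -eqz_mod_dvd in d2.
have small (o : 'I_n) : ((o : nat)%:Z %% n%:Z)%Z = (o : nat)%:Z.
  by apply: modz_small; rewrite ltz_nat ltn_ord andbT.
move/eqP: d1; rewrite !small => /Posz_inj' ii.
move/eqP: d2; rewrite !small => /Posz_inj' jj.
congr pair; apply: val_inj => //.
all: exact: i.
Qed.

Lemma conj_pow (P X Y : mat2) m : P * X = Y * P -> P * X ^+ m = Y ^+ m * P.
Proof.
move=> e; elim: m => [|m IH]; first by rewrite !expr0 mul1r mulr1.
by rewrite !exprS mulrA e -mulrA IH mulrA.
Qed.

Lemma lat_stats (P X Y : mat2) n : P * X = Y * P -> coprime `|\det P| n ->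
  exists phi : {perm Lat n}, (forall x y, lat_edge X x y = lat_edge Y (phi x) (phi y)) /\
     #|[set x : Lat n | lat_map X x == x]| = #|[set x : Lat n | lat_map Y x == x]|.
Proof.
move=> e cp.
have inj := @lat_map_inj P n cp.
exists (perm inj).
have key x : lat_map Y (lat_map P x) = lat_map P (lat_map X x).
  by rewrite -!lat_map_mul e.
split.
  by move=> x y; rewrite /lat_edge !permE key (inj_eq inj).
rewrite -(card_imset _ (@perm_inj _ (perm inj))).
apply: eq_card => y; rewrite [in RHS]inE; apply/imsetP/idP.
  by case=> x; rewrite inE => /eqP Hx ->; rewrite permE key Hx.
move=> /eqP Hy; exists (((perm inj)^-1)%g y); last by rewrite permKV.
rewrite inE; apply/eqP; apply: (@lat_map_inj P n cp).
have := permKV (perm inj) y; rewrite permE => hy.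
by rewrite -key hy Hy.
Qed.
Definition castE := (intrD, intrB, intrN, intrM, mulr1z, mulr0z).

Definition fr {R : realType} (r : R) : R := r - (Num.floor r)%:~R.

Lemma fr_ge0 (R : realType) (r : R) : 0 <= fr r.
Proof. by rewrite /fr subr_ge0 Num.Theory.floor_le. Qed.

Lemma fr_lt1 (R : realType) (r : R) : fr r < 1.
Proof. by rewrite /fr ltrBlDl -(mulr1z (1 : R)) -intrD Num.Theory.floorD1_gt. Qed.

Lemma fr_int (R : realType) (y : R) (k : int) : 0 <= y < 1 -> fr (y + k%:~R) = y.
Proof.
move=> /andP[y0 y1]; rewrite /fr (@Num.Theory.floor_def _ _ k); first by rewrite addrK.
by rewrite intrD mulr1z lerDr y0 /= [k%:~R + _]addrC ltrD2r.
Qed.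

Lemma int_small (R : realType) (r : R) (k : int) : r = k%:~R -> -1 < r < 1 -> k = 0.
Proof.
move=> -> /andP[h1 h2].
have : (-1 : R) = (-1)%:~R by rewrite intrN mulr1z.
move=> e; rewrite e ltr_int in h1; rewrite ltrz1 in h2; lia.
Qed.

Lemma is_int_z (R : realType) (k : int) : is_int (k%:~R : R).
Proof. by exists k. Qed.

Lemma detXm1 (X : mat2) : \det (X - 1) = (ent X 0 0 - 1)*(ent X 1 1 - 1) - ent X 0 1 * ent X 1 0.
Proof. by rewrite {1}[X]mkE mk1 mk_opp mk_add det_mk; ring. Qed.

Lemma fix_den (R : realType) (X : mat2) (x : R*R) z1 z2 :
 (mat_act X x).1 - x.1 = z1%:~R -> (mat_act X x).2 - x.2 = z2%:~R ->
 (\det (X - 1))%:~R * x.1 = ((ent X 1 1 - 1) * z1 - ent X 0 1 * z2)%:~R /\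
 (\det (X - 1))%:~R * x.2 = ((ent X 0 0 - 1) * z2 - ent X 1 0 * z1)%:~R.
Proof. rewrite /mat_act /= => h1 h2; rewrite detXm1 !castE -h1 -h2; split; ring. Qed.

Lemma coord_eq (R : realType) (D : int) (x y : R) (a b k : int) : D != 0 ->
  D%:~R * x = a%:~R -> D%:~R * y = b%:~R -> 0 <= x < 1 -> 0 <= y < 1 ->
  `|y - x - k%:~R| < `|(D%:~R : R)|^-1 -> y = x.
Proof.
move=> D0 hx hy /andP[x0 x1] /andP[y0 y1] hk.
have DR : (D%:~R : R) != 0 by rewrite intr_eq0.
have hm : D%:~R * (y - x - k%:~R) = (b - a - D*k)%:~R by rewrite !castE -hx -hy; ring.
have lt1 : `|((b - a - D*k)%:~R : R)| < 1.
  have Dp : 0 < `|(D%:~R : R)| by rewrite normr_gt0.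
  have : `|(D%:~R : R)| * `|y - x - k%:~R| < `|(D%:~R : R)| * `|(D%:~R : R)|^-1 by rewrite ltr_pM2l.
  by rewrite mulfV ?normr_eq0 // -normrM hm.
rewrite -intr_norm ltrz1 in lt1.
have m0 : b - a - D * k = 0 by lia.
rewrite m0 mulr0z in hm.
move/eqP: hm; rewrite mulf_eq0 (negbTE DR) /= subr_eq0 => /eqP hk'.
have kz : k = 0.
  apply: (@int_small R (y - x)); first by rewrite hk'.
  by apply/andP; split; lra.
by move: hk'; rewrite kz mulr0z; lra.
Qed.

Lemma iso_of_fixed (R : realType) (X : mat2) (x : R * R) :
  \det (X - 1) != 0 -> torus_fixed X x -> torus_isolated_fixed X x.
Proof.
move=> dX fx; split => //.
set D := \det (X - 1) in dX.
have DR : (D%:~R : R) != 0 by rewrite intr_eq0.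
exists (`|(D%:~R : R)|^-1); split; first by rewrite invr_gt0 normr_gt0.
move=> y fy [k1 [k2 [hk1 hk2]]].
case: fx => [[/andP[x10 x11] /andP[x20 x21]] [[z1 hz1] [z2 hz2]]].
case: fy => [[/andP[y10 y11] /andP[y20 y21]] [[w1 hw1] [w2 hw2]]].
have [ex1 ex2] := @fix_den R X x z1 z2 hz1 hz2.
have [ey1 ey2] := @fix_den R X y w1 w2 hw1 hw2.
case: x ex1 ex2 x10 x11 x20 x21 hk1 hk2 {hz1 hz2} => x1 x2 /= ex1 ex2 x10 x11 x20 x21 hk1 hk2.
case: y ey1 ey2 y10 y11 y20 y21 hk1 hk2 {hw1 hw2} => y1 y2 /= ey1 ey2 y10 y11 y20 y21 hk1 hk2.
congr pair.
- by apply: (@coord_eq R D _ _ _ _ _ dX ex1 ey1 _ _ hk1); apply/andP.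
- by apply: (@coord_eq R D _ _ _ _ _ dX ex2 ey2 _ _ hk2); apply/andP.
Qed.

Lemma ker2 (p q r s : int) : p * s - q * r = 0 ->
  exists v1 v2 : int, ((v1 != 0) || (v2 != 0)) /\ p * v1 + q * v2 = 0 /\ r * v1 + s * v2 = 0.
Proof.
move=> h.
case: (boolP ((q != 0) || (p != 0))) => [nz|].
  exists q, (-p); split; first by rewrite oppr_eq0.
  by split; lia.
rewrite negb_or !negbK => /andP[/eqP q0 /eqP p0].
case: (boolP ((s != 0) || (r != 0))) => [nz|].
  exists s, (-r); split; first by rewrite oppr_eq0.
  by rewrite p0 q0; split; lia.
rewrite negb_or !negbK => /andP[/eqP s0 /eqP r0].
by exists 1, 0; rewrite p0 q0 r0 s0; split => //; split; ring.
Qed.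

Lemma not_iso (R : realType) (X : mat2) (x : R * R) :
  \det (X - 1) = 0 -> ~ torus_isolated_fixed X x.
Proof.
rewrite detXm1 => dX [fx [eps [ep H]]].
have [v1 [v2 [vnz [kv1 kv2]]]] := @ker2 _ _ _ _ dX.
set V := `|v1| + `|v2|.
have V0 : 0 < V by rewrite /V; case/orP: vnz => ?; lia.
have VR : (0 : R) < V%:~R by rewrite ltr0z.
set t : R := eps / ((1 + eps) * V%:~R).
have tV : t * V%:~R = eps / (1 + eps).
  rewrite /t; field; apply/andP; split; rewrite ?gt_eqF //; lra.
have t0 : 0 < t by rewrite /t divr_gt0 // mulr_gt0 //; lra.
have tVe : t * V%:~R < eps by rewrite tV ltr_pdivrMr; nra.
have tV1 : t * V%:~R < 1 by rewrite tV ltr_pdivrMr; nra.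
have bv1 : `|t * v1%:~R| < eps /\ `|t * v1%:~R| < 1.
  have : `|t * v1%:~R| <= t * V%:~R.
    by rewrite normrM gtr0_norm // ler_pM2l // -intr_norm ler_int /V lerDl.
  by move=> h; split; apply: le_lt_trans h _.
have bv2 : `|t * v2%:~R| < eps /\ `|t * v2%:~R| < 1.
  have : `|t * v2%:~R| <= t * V%:~R.
    by rewrite normrM gtr0_norm // ler_pM2l // -intr_norm ler_int /V lerDr.
  by move=> h; split; apply: le_lt_trans h _.
case: x fx H => x1 x2 fx H.
set f1 := Num.floor (x1 + t * v1%:~R); set f2 := Num.floor (x2 + t * v2%:~R).
case: fx => _ [[z1 hz1] [z2 hz2]].
move: hz1 hz2; rewrite /mat_act /= => hz1 hz2.
have kv1R : ((ent X 0 0 - 1) * v1 + ent X 0 1 * v2)%:~R = 0 :> R by rewrite kv1.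
have kv2R : (ent X 1 0 * v1 + (ent X 1 1 - 1) * v2)%:~R = 0 :> R by rewrite kv2.
rewrite !castE in kv1R kv2R.
have E : (fr (x1 + t * v1%:~R), fr (x2 + t * v2%:~R)) = (x1, x2).
apply: H.
- split; first by split; apply/andP; split; rewrite ?fr_ge0 ?fr_lt1.
  rewrite /mat_act /fr /= -/f1 -/f2; split.
  + exists (z1 - ((ent X 0 0 - 1) * f1 + ent X 0 1 * f2)).
    rewrite !castE -hz1.
    transitivity (((ent X 0 0)%:~R * x1 + (ent X 0 1)%:~R * x2 - x1) - (((ent X 0 0)%:~R - 1) * f1%:~R + (ent X 0 1)%:~R * f2%:~R) + t * (((ent X 0 0)%:~R - 1) * v1%:~R + (ent X 0 1)%:~R * v2%:~R)); first ring.
    by rewrite kv1R mulr0 addr0.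
  + exists (z2 - (ent X 1 0 * f1 + (ent X 1 1 - 1) * f2)).
    rewrite !castE -hz2.
    transitivity (((ent X 1 0)%:~R * x1 + (ent X 1 1)%:~R * x2 - x2) - ((ent X 1 0)%:~R * f1%:~R + ((ent X 1 1)%:~R - 1) * f2%:~R) + t * ((ent X 1 0)%:~R * v1%:~R + ((ent X 1 1)%:~R - 1) * v2%:~R)); first ring.
    by rewrite kv2R mulr0 addr0.
- exists (- f1), (- f2); rewrite /fr /= -/f1 -/f2 !intrN.
  have -> : x1 + t * v1%:~R - f1%:~R - x1 - - f1%:~R = t * v1%:~R by ring.
  have -> : x2 + t * v2%:~R - f2%:~R - x2 - - f2%:~R = t * v2%:~R by ring.
  by case: bv1 => -> _; case: bv2 => -> _.
case: E; rewrite /fr -/f1 -/f2 => e1 e2.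
have f10 : f1 = 0.
  apply: (@int_small R (t * v1%:~R)); first by lra.
  by case: bv1 => _; rewrite ltr_norml.
have f20 : f2 = 0.
  apply: (@int_small R (t * v2%:~R)); first by lra.
  by case: bv2 => _; rewrite ltr_norml.
rewrite f10 mulr0z subr0 in e1; rewrite f20 mulr0z subr0 in e2.
have : t * v1%:~R = 0 by lra.
have : t * v2%:~R = 0 by lra.
move/eqP; rewrite mulf_eq0 (gt_eqF t0) intr_eq0 /= => /eqP h2.
move/eqP; rewrite mulf_eq0 (gt_eqF t0) intr_eq0 /= => /eqP h1.
by move: vnz; rewrite h1 h2.
Qed.

Lemma mul_ents (P X Y : mat2) : P * X = Y * P ->
  [/\ ent P 0 0 * ent X 0 0 + ent P 0 1 * ent X 1 0 = ent Y 0 0 * ent P 0 0 + ent Y 0 1 * ent P 1 0,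
      ent P 0 0 * ent X 0 1 + ent P 0 1 * ent X 1 1 = ent Y 0 0 * ent P 0 1 + ent Y 0 1 * ent P 1 1,
      ent P 1 0 * ent X 0 0 + ent P 1 1 * ent X 1 0 = ent Y 1 0 * ent P 0 0 + ent Y 1 1 * ent P 1 0 &
      ent P 1 0 * ent X 0 1 + ent P 1 1 * ent X 1 1 = ent Y 1 0 * ent P 0 1 + ent Y 1 1 * ent P 1 1].
Proof.
move=> e.
have : mk (ent P 0 0) (ent P 0 1) (ent P 1 0) (ent P 1 1) * mk (ent X 0 0) (ent X 0 1) (ent X 1 0) (ent X 1 1)
  = mk (ent Y 0 0) (ent Y 0 1) (ent Y 1 0) (ent Y 1 1) * mk (ent P 0 0) (ent P 0 1) (ent P 1 0) (ent P 1 1)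
  by rewrite -!mkE.
by rewrite !mk_mul => /mk_inj [e1 e2 e3 e4]; split.
Qed.

Lemma alg_map1 (R : realType) (p00 p01 p10 p11 x00 x01 x10 x11 y00 y01 x1 x2 z1 z2 f1 f2 : R) :
 x00*x1 + x01*x2 - x1 = z1 -> x10*x1 + x11*x2 - x2 = z2 ->
 p00*x00 + p01*x10 = y00* p00 + y01* p10 -> p00*x01 + p01*x11 = y00* p01 + y01* p11 ->
 y00*(p00*x1 + p01*x2 - f1) + y01*(p10*x1 + p11*x2 - f2) - (p00*x1 + p01*x2 - f1) =
   p00*z1 + p01*z2 - y00*f1 - y01*f2 + f1.
Proof.
move=> h1 h2 e1 e2; rewrite -h1 -h2.
transitivity (p00*(x00*x1 + x01*x2 - x1) + p01*(x10*x1 + x11*x2 - x2) - y00*f1 - y01*f2 + f1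
  + x1*((y00* p00 + y01* p10) - (p00*x00 + p01*x10)) + x2*((y00* p01 + y01* p11) - (p00*x01 + p01*x11))); first ring.
by rewrite e1 e2 !subrr; ring.
Qed.

Lemma alg_map2 (R : realType) (p00 p01 p10 p11 x00 x01 x10 x11 y10 y11 x1 x2 z1 z2 f1 f2 : R) :
 x00*x1 + x01*x2 - x1 = z1 -> x10*x1 + x11*x2 - x2 = z2 ->
 p10*x00 + p11*x10 = y10* p00 + y11* p10 -> p10*x01 + p11*x11 = y10* p01 + y11* p11 ->
 y10*(p00*x1 + p01*x2 - f1) + y11*(p10*x1 + p11*x2 - f2) - (p10*x1 + p11*x2 - f2) =
   p10*z1 + p11*z2 - y10*f1 - y11*f2 + f2.
Proof.
move=> h1 h2 e1 e2; rewrite -h1 -h2.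
transitivity (p10*(x00*x1 + x01*x2 - x1) + p11*(x10*x1 + x11*x2 - x2) - y10*f1 - y11*f2 + f2
  + x1*((y10* p00 + y11* p10) - (p10*x00 + p11*x10)) + x2*((y10* p01 + y11* p11) - (p10*x01 + p11*x11))); first ring.
by rewrite e1 e2 !subrr; ring.
Qed.

Definition frv {R : realType} (u : R * R) : R * R := (fr u.1, fr u.2).

Lemma map_fixed (R : realType) (P X Y : mat2) (x : R * R) : P * X = Y * P ->
  torus_fixed X x -> torus_fixed Y (frv (mat_act P x)).
Proof.
move=> /mul_ents [E00 E01 E10 E11] [_ [[z1 hz1] [z2 hz2]]].
have c00 := congr1 (fun z : int => (z%:~R : R)) E00.
have c01 := congr1 (fun z : int => (z%:~R : R)) E01.
have c10 := congr1 (fun z : int => (z%:~R : R)) E10.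
have c11 := congr1 (fun z : int => (z%:~R : R)) E11.
rewrite /= !castE in c00 c01 c10 c11.
case: x hz1 hz2 => x1 x2; rewrite /mat_act /= => hz1 hz2.
split; first by split; apply/andP; split; rewrite ?fr_ge0 ?fr_lt1.
rewrite /mat_act /frv /fr /=.
set f1 := Num.floor _; set f2 := Num.floor _.
split.
- exists (ent P 0 0 * z1 + ent P 0 1 * z2 - ent Y 0 0 * f1 - ent Y 0 1 * f2 + f1).
  rewrite !castE; exact: alg_map1 hz1 hz2 c00 c01.
- exists (ent P 1 0 * z1 + ent P 1 1 * z2 - ent Y 1 0 * f1 - ent Y 1 1 * f2 + f2).
  rewrite !castE; exact: alg_map2 hz1 hz2 c10 c11.
Qed.

Lemma coord_int (R : realType) (d D u v m a : int) (z : R) : u * d + v * D = 1 ->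
  d%:~R * z = m%:~R -> D%:~R * z = a%:~R -> z = (u * m + v * a)%:~R.
Proof.
move=> uv h1 h2.
have e : (u%:~R * d%:~R + v%:~R * D%:~R : R) = 1 by rewrite -!intrM -intrD uv.
rewrite !castE -h1 -h2.
transitivity ((u%:~R * d%:~R + v%:~R * D%:~R) * z); first by rewrite e mul1r.
ring.
Qed.

Lemma detE (P : mat2) : \det P = ent P 0 0 * ent P 1 1 - ent P 0 1 * ent P 1 0.
Proof. by rewrite {1}[P]mkE det_mk. Qed.

Lemma map_inj (R : realType) (P X : mat2) (x y : R * R) :
  coprimez (\det P) (\det (X - 1)) -> torus_fixed X x -> torus_fixed X y ->
  frv (mat_act P x) = frv (mat_act P y) -> x = y.
Proof.
move=> /coprimezP [[u v] /= uv].
case=> [[/andP[x10 x11] /andP[x20 x21]] [[z1 hz1] [z2 hz2]]].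
case=> [[/andP[y10 y11] /andP[y20 y21]] [[w1 hw1] [w2 hw2]]].
have [ex1 ex2] := @fix_den R X x z1 z2 hz1 hz2.
have [ey1 ey2] := @fix_den R X y w1 w2 hw1 hw2.
case: x ex1 ex2 x10 x11 x20 x21 {hz1 hz2} => x1 x2 /= ex1 ex2 x10 x11 x20 x21.
case: y ey1 ey2 y10 y11 y20 y21 {hw1 hw2} => y1 y2 /= ey1 ey2 y10 y11 y20 y21.
rewrite /frv /mat_act /fr /= => [[e1 e2]].
set F1 := Num.floor _ in e1; set G1 := Num.floor _ in e1.
set F2 := Num.floor _ in e2; set G2 := Num.floor _ in e2.
set p00 := ent P 0 0 in e1 e2; set p01 := ent P 0 1 in e1 e2.
set p10 := ent P 1 0 in e1 e2; set p11 := ent P 1 1 in e1 e2.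
have hm1 : p00%:~R * (x1 - y1) + p01%:~R * (x2 - y2) = (F1 - G1)%:~R :> R.
  by rewrite castE; lra.
have hm2 : p10%:~R * (x1 - y1) + p11%:~R * (x2 - y2) = (F2 - G2)%:~R :> R.
  by rewrite castE; lra.
have hd1 : (\det P)%:~R * (x1 - y1) = (p11 * (F1 - G1) - p01 * (F2 - G2))%:~R :> R.
  by rewrite detE -/p00 -/p01 -/p10 -/p11 !castE -(intrB _ F1) -(intrB _ F2) -hm1 -hm2; ring.
have hd2 : (\det P)%:~R * (x2 - y2) = (p00 * (F2 - G2) - p10 * (F1 - G1))%:~R :> R.
  by rewrite detE -/p00 -/p01 -/p10 -/p11 !castE -(intrB _ F1) -(intrB _ F2) -hm1 -hm2; ring.
have hD1 : (\det (X - 1))%:~R * (x1 - y1) = (((ent X 1 1 - 1) * z1 - ent X 0 1 * z2) - ((ent X 1 1 - 1) * w1 - ent X 0 1 * w2))%:~R :> R.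
  by rewrite intrB -ex1 -ey1; ring.
have hD2 : (\det (X - 1))%:~R * (x2 - y2) = (((ent X 0 0 - 1) * z2 - ent X 1 0 * z1) - ((ent X 0 0 - 1) * w2 - ent X 1 0 * w1))%:~R :> R.
  by rewrite intrB -ex2 -ey2; ring.
have k1 := @coord_int R _ _ _ _ _ _ _ uv hd1 hD1.
have k2 := @coord_int R _ _ _ _ _ _ _ uv hd2 hD2.
have := @int_small R _ _ k1; have := @int_small R _ _ k2.
move=> h2 h1.
have d1 : x1 - y1 = 0 by rewrite k1 h1 //; apply/andP; split; lra.
have d2 : x2 - y2 = 0 by rewrite k2 h2 //; apply/andP; split; lra.
by congr pair; lra.
Qed.

Lemma mk_scale u a b c d : u *: mk a b c d = mk (u*a) (u*b) (u*c) (u*d).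
Proof. by apply/matrixP=> i j; rewrite !mxE; case: i => [[|[|i]] Hi] //; case: j => [[|[|j]] Hj]. Qed.

Lemma fr_congr (R : realType) (a b : R) : a = b -> a - (Num.floor a)%:~R = fr b.
Proof. by move->. Qed.

Lemma map_surj (R : realType) (P X Y : mat2) (y : R * R) : P * X = Y * P -> \det P != 0 ->
  \det (X - 1) = \det (Y - 1) -> coprimez (\det P) (\det (X - 1)) -> torus_fixed Y y ->
  exists x, torus_fixed X x /\ frv (mat_act P x) = y.
Proof.
move=> e dP dXY /coprimezP [[u v] /= uv] fy.
have AK := @adj_conj Y P X (esym e) dP.
pose Q := u *: \adj P.
have QE : Q * Y = X * Q by rewrite /Q -scalerAl AK scalerAr.
exists (frv (mat_act Q y)); split; first exact: map_fixed QE fy.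
case: fy => [[/andP[y10 y11] /andP[y20 y21]] [[w1 hw1] [w2 hw2]]].
have [ey1 ey2] := @fix_den R Y y w1 w2 hw1 hw2.
rewrite -dXY in ey1 ey2.
have [e1 ey1'] : exists e1 : int, (\det (X - 1))%:~R * y.1 = e1%:~R := ex_intro _ _ ey1.
have [e2 ey2'] : exists e2 : int, (\det (X - 1))%:~R * y.2 = e2%:~R := ex_intro _ _ ey2.
have QM : Q = mk (u * ent P 1 1) (u * - ent P 0 1) (u * - ent P 1 0) (u * ent P 0 0).
  by rewrite /Q {1}[P]mkE adj_mk mk_scale.
rewrite detE in uv.
have uvR : u%:~R * ((ent P 0 0)%:~R * (ent P 1 1)%:~R - (ent P 0 1)%:~R * (ent P 1 0)%:~R)
   + v%:~R * (\det (X - 1))%:~R = 1 :> R.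
  by rewrite -!intrM -intrB -intrM -intrD uv.
rewrite QM.
case: y y10 y11 y20 y21 ey1' ey2' {hw1 hw2 ey1 ey2} => y1 y2 /= y10 y11 y20 y21 ey1' ey2'.
rewrite /frv /mat_act /fr !entE /=.
set g1 := Num.floor (_ * y1 + _ * y2); set g2 := Num.floor (_ * y1 + _ * y2).
congr pair.
- transitivity (fr (y1 + (- (v * e1) - ent P 0 0 * g1 - ent P 0 1 * g2)%:~R)); last first.
    by rewrite fr_int // y10 y11.
  apply: fr_congr; rewrite !castE -ey1';
  (transitivity ((u%:~R * ((ent P 0 0)%:~R * (ent P 1 1)%:~R - (ent P 0 1)%:~R * (ent P 1 0)%:~R)
   + v%:~R * (\det (X - 1))%:~R) * y1 - v%:~R * ((\det (X - 1))%:~R * y1)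
   - (ent P 0 0)%:~R * g1%:~R - (ent P 0 1)%:~R * g2%:~R); first ring);
  by rewrite uvR mul1r; ring.
- transitivity (fr (y2 + (- (v * e2) - ent P 1 0 * g1 - ent P 1 1 * g2)%:~R)); last first.
    by rewrite fr_int // y20 y21.
  apply: fr_congr; rewrite !castE -ey2';
  (transitivity ((u%:~R * ((ent P 0 0)%:~R * (ent P 1 1)%:~R - (ent P 0 1)%:~R * (ent P 1 0)%:~R)
   + v%:~R * (\det (X - 1))%:~R) * y2 - v%:~R * ((\det (X - 1))%:~R * y2)
   - (ent P 1 0)%:~R * g1%:~R - (ent P 1 1)%:~R * g2%:~R); first ring);
  by rewrite uvR mul1r; ring.
Qed.

Theorem corollary42 (M N : 'M[int]_2) :
  \det M = \det N -> \tr M = \tr N -> mgcd M = mgcd N ->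
  (forall n : nat, (0 < n)%N -> same_local_stats M N n) /\
  (forall n m : nat, (0 < n)%N -> lat_fix_count (M ^+ m) n = lat_fix_count (N ^+ m) n) /\
  (forall (R : realType) (m : nat),
     equinumerous (torus_isolated_fixed (R:=R) (M ^+ m))
                  (torus_isolated_fixed (R:=R) (N ^+ m))).
Proof.
move=> hd ht hg.
have CE := @conj_exists M N hd ht hg.
split; [|split].
- move=> n n0; have [P [e [cp _]]] := CE n n0.
  have [phi [H _]] := @lat_stats P M N n e cp.
  by exists phi.
- move=> n m n0; have [P [e [cp _]]] := CE n n0.
  have [phi [_ H]] := @lat_stats P (M ^+ m) (N ^+ m) n (@conj_pow P M N m e) cp.
  exact: H.
move=> R m.
have [P0 [e0 [_ d0]]] := CE 1%N isT.
have eX := @conj_pow P0 M N m e0.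
have dXY : \det (M ^+ m - 1) = \det (N ^+ m - 1).
  have : P0 * (M ^+ m - 1) = (N ^+ m - 1) * P0 by rewrite mulrBr mulrBl mulr1 mul1r eX.
  move/(congr1 determinant); rewrite !detM => h.
  by apply: (mulfI d0); rewrite h mulrC.
case: (eqVneq (\det (M ^+ m - 1)) 0) => [D0|D0].
  have D0' : \det (N ^+ m - 1) = 0 by rewrite -dXY.
  exists id; split; [|split].
  - by move=> x /(@not_iso R _ x D0).
  - by move=> x y /(@not_iso R _ x D0).
  - by move=> y /(@not_iso R _ y D0').
have nD : (0 < `|\det (M ^+ m - 1)|)%N by rewrite absz_gt0.
have [P [e [cp dP]]] := CE _ nD.
have eP := @conj_pow P M N m e.
have cpz : coprimez (\det P) (\det (M ^+ m - 1)) by rewrite coprimezE.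
have D0' : \det (N ^+ m - 1) != 0 by rewrite -dXY.
exists (fun x => frv (mat_act P x)); split; [|split].
- move=> x [fx _]; apply: (@iso_of_fixed R _ _ D0'); exact: (@map_fixed R P _ _ x eP fx).
- move=> x y [fx _] [fy _]; exact: (@map_inj R P _ x y cpz fx fy).
- move=> y [fy _]; have [x [fx ex]] := @map_surj R P _ _ y eP dP dXY cpz fy.
  by exists x; split => //; apply: (@iso_of_fixed R _ _ D0).
Qed.
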